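(* Let $\psi,\phi\in\mathbf{\Psi}_n$, and $\bar\phi(t):=\phi(t_1,\ldots,t_{n-1},0)$ for $t:=(t_1,\ldots,t_{n-1})\in\Omega_{n-1}$. Then there exists a $\kappa>0$ such that $$\max\{|\!|\!|(x_1,\ldots,x_{n-1})|\!|\!|_{\bar\phi},\ |\!|\!|(x_n,\ldots,x_{n})|\!|\!|_{\bar\phi},\ \|x_n\|\}\le \kappa\cdot|\!|\!|x|\!|\!|_\psi$$ for all $x:=(x_1,\ldots,x_n)\in X^n$.
   Context: Let $(X,\|\cdot\|)$ be a normed vector space, $n\ge2$. $\Omega_k:=\{t\in\mathbb{R}^k\mid t_i\ge0,\ \sum_i t_i=1\}$, $\Omega_k^\circ:=\{t\in\Omega_k\mid t_i<1\ \forall i\}$. $\mathbf{\Psi}_k$ is the class of convex continuous $\psi:\Omega_k\to\mathbb{R}$ with (B1) $\psi(\mathbf{e}_i)=1$ for all standard unit vectors $\mathbf{e}_i$ and (B2) $\psi(t)\ge(1-t_i)\psi\big(\frac{t_1}{1-t_i},\ldots,\frac{t_{i-1}}{1-t_i},0,\frac{t_{i+1}}{1-t_i},\ldots,\frac{t_k}{1-t_i}\big)$ for all $t\in\Omega_k^\circ$, $i=1,\ldots,k$. For $\psi\in\mathbf{\Psi}_k$, $|\!|\!|x|\!|\!|_\psi:=\big(\sum_{i}\|x_i\|\big)\,\psi\big(\frac{\|x_1\|}{\sum_{i}\|x_i\|},\ldots,\frac{\|x_k\|}{\sum_{i}\|x_i\|}\big)$ for $0\ne x\in X^k$, $|\!|\!|0|\!|\!|_\psi:=0$.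 One has $\bar\phi\in\mathbf{\Psi}_{n-1}$; in $|\!|\!|(x_n,\ldots,x_n)|\!|\!|_{\bar\phi}$ the vector $x_n$ is repeated $n-1$ times. *)

(* Defs.v *)
From HB Require Import structures.
From mathcomp Require Import all_boot all_order all_algebra.
From mathcomp Require Import all_classical all_reals all_analysis.
Set Implicit Arguments. Unset Strict Implicit. Unset Printing Implicit Defensive.
Import Order.TTheory GRing.Theory Num.Theory.
Import numFieldNormedType.Exports.
Local Open Scope classical_set_scope.
Local Open Scope ring_scope.

Definition Omega (R : realType) (k : nat) : set 'rV[R]_k :=
  [set t | (forall i, 0 <= t 0 i) /\ \sum_(i < k) t 0 i = 1].

Definition Omega_int (R : realType) (k : nat) : set 'rV[R]_k :=
  [set t | @Omega R k t /\ (forall i, t 0 i < 1)].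

Definition unitv (R : realType) (k : nat) (i : 'I_k) : 'rV[R]_k :=
  \row_(j < k) (i == j)%:R.

Definition dropi (R : realType) (k : nat) (t : 'rV[R]_k) (i : 'I_k) : 'rV[R]_k :=
  \row_(j < k) (if j == i then 0 else t 0 j / (1 - t 0 i)).

Definition PsiClass (R : realType) (k : nat) (psi : 'rV[R]_k -> R) : Prop :=
  [/\ (forall s t (l : R), @Omega R k s -> @Omega R k t -> 0 <= l <= 1 ->
         psi (l *: s + (1 - l) *: t) <= l * psi s + (1 - l) * psi t),
      {within @Omega R k, continuous psi},
      (forall i, psi (unitv R i) = 1) &
      (forall t i, @Omega_int R k t ->
         (1 - t 0 i) * psi (dropi t i) <= psi t)].

Definition psinorm (R : realType) (X : normedModType R) (k : nat)
  (psi : 'rV[R]_k -> R) (x : 'I_k -> X) : R :=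
  let S := \sum_(i < k) `|x i| in
  if `[< x = (fun _ => 0) >] then 0 else S * psi (\row_(i < k) (`|x i| / S)).

(* phi-bar : restriction of phi to the face t_n = 0 *)
Definition phibar (R : realType) (n : nat) (phi : 'rV[R]_n -> R)
  (t : 'rV[R]_n.-1) : R :=
  phi (\row_(j < n) (if @insub _ (fun m => (m < n.-1)%N) 'I_n.-1 (val j) is Some j' then t 0 j' else 0)).

Definition ord_last (n : nat) (hn : (0 < n)%N) : 'I_n :=
  Ordinal (n := n) (m := n.-1) (eq_ind_r is_true hn (ltn_predL n)).

(* Main.v *)
Require Import Defs.
From HB Require Import structures.
From mathcomp Require Import all_boot all_order all_algebra.
From mathcomp Require Import all_classical all_reals all_analysis.
From mathcomp Require Import ring lra.
Import Order.TTheory GRing.Theory Num.Theory.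
Import numFieldNormedType.Exports.
Local Open Scope ring_scope.

Section Helpers.
Set Implicit Arguments.
Variable R : realType.

Definition supp {k} (t : 'rV[R]_k) : {set 'I_k} := [set i | t 0 i != 0].

Lemma unit_of_ge1 k (t : 'rV[R]_k) (j : 'I_k) :
  Omega t -> 1 <= t 0 j -> t = unitv R j.
Proof.
case=> t0 ts hj.
move: ts; rewrite (bigD1 j) //= => e.
have hs : 0 <= \sum_(i < k | i != j) t 0 i by apply: sumr_ge0.
have s0 : \sum_(i < k | i != j) t 0 i = 0 by lra.
have tj1 : t 0 j = 1 by lra.
apply/rowP => i; rewrite /unitv !mxE.
case: (eqVneq j i) => [<-|ne] //=.
by apply: (psumr_eq0P (fun i _ => t0 i) s0); rewrite eq_sym.
Qed.

Lemma unitv_Omega k (j : 'I_k) : Omega (unitv R j).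
Proof.
split=> [i|]; rewrite /unitv.
  by rewrite mxE; case: (j == i).
rewrite (bigD1 j) //= mxE eqxx big1 ?addr0 // => i ij.
by rewrite mxE eq_sym (negbTE ij).
Qed.

Lemma dropi_Omega k (t : 'rV[R]_k) i : Omega_int t -> Omega (dropi t i).
Proof.
case=> [[t0 ts] t1].
have c0 : 0 < 1 - t 0 i by have := t1 i; lra.
split=> [j|]; rewrite /dropi.
  rewrite mxE; case: ifP => _ //; apply: divr_ge0 => //; exact: ltW.
rewrite (bigD1 i) //= mxE eqxx add0r.
rewrite (eq_bigr (fun j => t 0 j / (1 - t 0 i))); last first.
  by move=> j ji; rewrite mxE (negbTE ji).
rewrite -mulr_suml.
move: ts; rewrite (bigD1 i) //= => e.
have -> : \sum_(j < k | j != i) t 0 j = 1 - t 0 i by lra.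
by rewrite divff // gt_eqF.
Qed.

Lemma dropi_supp k (t : 'rV[R]_k) i : 0 < t 0 i ->
  (#|supp (dropi t i)| < #|supp t|)%N.
Proof.
move=> ti; apply: proper_card; apply/properP; split.
  apply/fintype.subsetP => j; rewrite !inE /dropi mxE; case: ifP => _; first by rewrite eqxx.
  apply: contra; by move=> /eqP ->; rewrite mul0r.
exists i; rewrite !inE /dropi ?mxE ?eqxx //; exact: lt0r_neq0.
Qed.

Lemma simplex_ind k (P : 'rV[R]_k -> Prop) :
  (forall i, P (unitv R i)) ->
  (forall t, Omega_int t -> (forall i, 0 < t 0 i -> P (dropi t i)) -> P t) ->
  forall t, Omega t -> P t.
Proof.
move=> H1 H2.
suff: forall N t, Omega t -> (#|supp t| < N)%N -> P t.
  by move=> H t Ht; apply: (H #|supp t|.+1).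
elim=> [//|N IH] t Ht hN.
case: (pselect (forall i, t 0 i < 1)) => [lt1|].
  apply: H2; first by split.
  move=> i ti; apply: IH; first by apply: dropi_Omega.
  have h := @dropi_supp _ t i ti. exact: leq_trans h hN.
move=> /existsNP [j /negP]; rewrite -leNgt => hj.
by rewrite (@unit_of_ge1 _ t j Ht hj).
Qed.

Lemma exists_pos_ne k (t : 'rV[R]_k) j : Omega_int t ->
  exists i, i != j /\ 0 < t 0 i.
Proof.
case=> [[t0 ts] t1].
case: (pickP (fun i => (i != j) && (0 < t 0 i))) => [i /andP[? ?]|H].
  by exists i.
have : \sum_(i < k | i != j) t 0 i <= 0.
  apply: sumr_le0 => i ij; move: (H i); rewrite ij /= => /negbT.
  by rewrite -leNgt.
move: ts; rewrite (bigD1 j) //= => e.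
have := t1 j; lra.
Qed.

Lemma exists_pos k (t : 'rV[R]_k) : Omega t -> exists i, 0 < t 0 i.
Proof.
case=> t0 ts.
case: (pickP (fun i => (0 < t 0 i))) => [i ?|H]; first by exists i.
have : \sum_(i < k) t 0 i <= 0.
  apply: sumr_le0 => i _; move: (H i) => /negbT.
  by rewrite -leNgt.
lra.
Qed.

Lemma decomp k (t : 'rV[R]_k) i : Omega_int t ->
  t = t 0 i *: unitv R i + (1 - t 0 i) *: dropi t i.
Proof.
case=> [[t0 ts] t1].
have c0 : 1 - t 0 i != 0 by have := t1 i; apply: contraTneq => ?; lra.
apply/rowP => j; rewrite /unitv /dropi !mxE.
case: (eqVneq j i) => [->|ne]; rewrite ?eqxx /=.
  by rewrite mulr1 mulr0 addr0.
rewrite mulr0 add0r; by field.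
Qed.

Lemma le1 k (phi : 'rV[R]_k -> R) t : PsiClass phi -> Omega t -> phi t <= 1.
Proof.
case=> conv _ B1 _.
move: t; apply: (@simplex_ind _ (fun t => phi t <= 1)) => [i|s Hs IH] /=.
  by rewrite B1.
have [i si] := exists_pos Hs.1.
have s1 := Hs.2 i.
have hd := IH i si.
rewrite (decomp i Hs).
have h := conv (unitv R i) (dropi s i) (s 0 i) (unitv_Omega i) (dropi_Omega i Hs).
rewrite B1 in h.
apply: le_trans (h _) _; first by rewrite (ltW si) ltW.
nra.
Qed.

Lemma ge_coord k (psi : 'rV[R]_k -> R) t : PsiClass psi -> Omega t ->
  forall j, t 0 j <= psi t.
Proof.
case=> _ _ B1 B2.
move: t; apply: (@simplex_ind _ (fun t => forall j, t 0 j <= psi t)) => [i|s Hs IH] j /=.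
  by rewrite B1 /unitv mxE; case: (i == j).
have [i [ij si]] := exists_pos_ne j Hs.
have s1 := Hs.2 i.
have hd := IH i si j.
move: hd; rewrite /dropi mxE [j == i]eq_sym (negbTE ij) => hd.
have h2 := B2 s i Hs.
apply: le_trans h2.
have e : s 0 j = (1 - s 0 i) * (s 0 j / (1 - s 0 i)).
  by field; apply: contraTneq s1 => ?; lra.
rewrite {1}e; apply: ler_wpM2l => //; lra.
Qed.

Lemma ge_inv k (psi : 'rV[R]_k -> R) t : PsiClass psi -> Omega t ->
  1 <= k%:R * psi t.
Proof.
move=> Hp Ht; have h := ge_coord Hp Ht.
case: Ht => _ ts; rewrite -{1}ts.
apply: le_trans (ler_sum _ (fun j _ => h j)) _.
by rewrite sumr_const card_ord mulr_natl.
Qed.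

Lemma phibar_le1 m (phi : 'rV[R]_m.+1 -> R) (t : 'rV[R]_m) :
  PsiClass phi -> Omega t -> phibar phi t <= 1.
Proof.
move=> Hp [t0 ts]; rewrite /phibar; apply: (le1 Hp); split.
  by move=> j; rewrite mxE; case: insubP => [u _ _|_] //.
rewrite big_ord_recr /= mxE; case: insubP => [u hu _|_].
  by move: hu; rewrite /= ltnn.
rewrite addr0 -[RHS]ts; apply: eq_bigr => j _; rewrite mxE.
case: insubP => [u _ hu|]; last by rewrite /= ltn_ord.
by congr (t 0 _); apply: val_inj.
Qed.

Variable X : normedModType R.

Lemma nonzero_pos k (x : 'I_k -> X) : ~ (x = fun _ => 0) ->
  0 < \sum_i `|x i|.
Proof.
move=> nx.
have [i xi] : exists i, x i != 0.
  case: (pselect (exists i, x i != 0)) => // h; exfalso; apply: nx.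
  apply: funext => i; apply/eqP; apply: contra_notT h => hi; by exists i.
apply: (@lt_le_trans _ _ `|x i|); first by rewrite normr_gt0.
by rewrite (bigD1 i) //= lerDl sumr_ge0.
Qed.

Lemma row_Omega k (x : 'I_k -> X) : ~ (x = fun _ => 0) ->
  Omega (\row_(i < k) (`|x i| / \sum_i `|x i|)).
Proof.
move=> nx; have Sp := nonzero_pos nx.
split=> [j|]; first by rewrite mxE divr_ge0 // ltW.
under eq_bigr do rewrite mxE.
by rewrite -mulr_suml divff // gt_eqF.
Qed.

Lemma psinorm_ge k (psi : 'rV[R]_k -> R) (x : 'I_k -> X) : PsiClass psi ->
  \sum_i `|x i| <= k%:R * psinorm psi x.
Proof.
move=> Hp; rewrite /psinorm /=.
case: (pselect (x = fun _ => 0)) => [->|nx].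
  by rewrite asboolT // big1 ?mulr0 // => i _; rewrite normr0.
rewrite asboolF //.
have Sp := nonzero_pos nx.
have h := ge_inv Hp (row_Omega nx).
by rewrite mulrCA -{1}[\sum_i `|x i|]mulr1 ler_wpM2l // ltW.
Qed.

Lemma psinorm_le m (phi : 'rV[R]_m.+1 -> R) (y : 'I_m -> X) : PsiClass phi ->
  psinorm (phibar phi) y <= \sum_i `|y i|.
Proof.
move=> Hp; rewrite /psinorm /=.
case: (pselect (y = fun _ => 0)) => [->|nx].
  by rewrite asboolT // sumr_ge0.
rewrite asboolF //.
have Sp := nonzero_pos nx.
have h := phibar_le1 Hp (row_Omega nx).
by rewrite -[X in _ <= X]mulr1 ler_wpM2l // ltW.
Qed.
End Helpers.

Theorem proposition5p5 (R : realType) (X : normedModType R) (n : nat)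
  (hn : (2 <= n)%N) (psi phi : 'rV[R]_n -> R) :
  PsiClass psi -> PsiClass phi ->
  exists kappa : R, 0 < kappa /\
    forall x : 'I_n -> X,
      Num.max (Num.max
        (psinorm (phibar phi) (fun j : 'I_n.-1 => x (widen_ord (leq_pred n) j)))
        (psinorm (phibar phi) (fun _ : 'I_n.-1 => x (ord_last (ltnW hn)))))
        `|x (ord_last (ltnW hn))|
      <= kappa * psinorm psi x.
Proof.
case: n hn psi phi => [//|m] hn psi phi Hpsi Hphi.
have hm : 1 <= m%:R :> R by rewrite ler1n.
exists (m%:R * m.+1%:R); split.
  by rewrite mulr_gt0 // ltr0n //; apply: leq_trans hn.
move=> x.
set L := ord_last (ltnW hn).
have hP := @psinorm_ge _ _ _ psi x Hpsi.
set S := \sum_i `|x i| in hP.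
have S0 : 0 <= S by rewrite sumr_ge0.
have hA : psinorm (phibar phi) (fun j : 'I_(m.+1).-1 => x (widen_ord (leq_pred m.+1) j))
    <= \sum_(j < m) `|x (widen_ord (leq_pred m.+1) j)| := @psinorm_le _ _ _ phi _ Hphi.
have hA2 : \sum_(j < m) `|x (widen_ord (leq_pred m.+1) j)| <= S.
  rewrite /S big_ord_recr /=.
  rewrite (eq_bigr (fun j => `|x (widen_ord (leqnSn m) j)|)); last first.
    by move=> j _; congr (`|x _|); apply: val_inj.
  by rewrite lerDl.
have hB : psinorm (phibar phi) (fun _ : 'I_(m.+1).-1 => x L)
    <= \sum_(j < m) `|x L| := @psinorm_le _ _ _ phi _ Hphi.
rewrite sumr_const card_ord -mulr_natr in hB.
have hL : `|x L| <= S by rewrite /S (bigD1 L) //= lerDl sumr_ge0.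
have hL0 : 0 <= `|x L| by [].
rewrite !ge_max; apply/andP; split; [apply/andP; split|]; nra.
Qed.
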